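(* Let $(\mathcal B^0,\|\cdot\|_0)$ and $(\mathcal B^1,\|\cdot\|_1)$ be Banach spaces over $\mathbb K\in\{\mathbb R,\mathbb C\}$ with $\mathcal B^1\subset\mathcal B^0$ as a linear subspace, and let $\mathcal L:\mathcal B^1\to\mathcal B^0$ be a linear operator. The following are equivalent: (a) $\mathcal L$ is weak bounded; (b) whenever $f_\epsilon,f\in\mathcal B^1$ satisfy $\|f_\epsilon-f\|_0\to0$ as $\epsilon\to0$ and $\sup_{\epsilon>0}\|f_\epsilon\|_1<+\infty$, then $\|\mathcal Lf_\epsilon-\mathcal Lf\|_0\to0$ as $\epsilon\to0$; (c) $\sup\{\|\mathcal Lf\|_0:\ f\in\mathcal B^1,\ \|f\|_1\le1,\ \|f\|_0\le\delta\}\to0$ as $\delta\to0$.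
   Context: A linear operator $\mathcal L:\mathcal B^1\to\mathcal B^0$ is called weak bounded if for every $\epsilon>0$ there is a constant $c(\epsilon)>0$ such that $\|\mathcal Lf\|_0\le c(\epsilon)\|f\|_0+\epsilon\|f\|_1$ for all $f\in\mathcal B^1$. *)

(* Defs.v *)
From HB Require Import structures.
From mathcomp Require Import all_boot all_order all_algebra.
From mathcomp Require Import all_classical all_reals all_analysis.
From mathcomp Require Import complex.
Set Implicit Arguments. Unset Strict Implicit. Unset Printing Implicit Defensive.
Import Order.TTheory GRing.Theory Num.Theory.
Import numFieldNormedType.Exports.
Local Open Scope classical_set_scope.
Local Open Scope ring_scope.

(* B^1 is modelled as a normed space V1 together with an injective linear
   map i : V1 -> V0 realising the inclusion B^1 ⊂ B^0; for f in B^1,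
   ||f||_1 = `|f| (norm of V1) and ||f||_0 = `|i f| (norm of V0). *)

Definition weak_bounded (K : numFieldType) (V0 V1 : normedModType K)
    (i L : V1 -> V0) : Prop :=
  forall eps : K, 0 < eps ->
    exists c : K, 0 < c /\ forall f : V1, `|L f| <= c * `|i f| + eps * `|f|.

(* condition (b); the family (f_eps)_{eps>0} is a function K -> V1, of which
   only the values at eps > 0 matter ("eps -> 0" means eps -> 0^+). *)
Definition cond_b (K : numFieldType) (V0 V1 : normedModType K)
    (i L : V1 -> V0) : Prop :=
  forall (fe : K -> V1) (f : V1),
    (fun eps => `|i (fe eps) - i f|) @ 0^'+ --> (0 : K) ->
    (exists M : K, forall eps : K, 0 < eps -> `|fe eps| <= M) ->
    (fun eps => `|L (fe eps) - L f|) @ 0^'+ --> (0 : K).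

(* condition (c): sup{ ||L f||_0 : ||f||_1 <= 1, ||f||_0 <= delta } -> 0 as
   delta -> 0^+, written out: for every eta > 0 there is d > 0 such that for
   every 0 < delta < d the supremum is <= eta. *)
Definition cond_c (K : numFieldType) (V0 V1 : normedModType K)
    (i L : V1 -> V0) : Prop :=
  forall eta : K, 0 < eta -> exists d : K, 0 < d /\
    forall delta : K, 0 < delta -> delta < d ->
      forall f : V1, `|f| <= 1 -> `|i f| <= delta -> `|L f| <= eta.

Definition weak_bounded_TFAE (K : numFieldType) : Prop :=
  forall (V0 V1 : completeNormedModType K)
         (i : {linear V1 -> V0}) (L : {linear V1 -> V0}),
    injective i ->
    [<-> weak_bounded i L; cond_b i L; cond_c i L].

(* Main.v *)
Require Import Defs.
From HB Require Import structures.
From mathcomp Require Import all_boot all_order all_algebra.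
From mathcomp Require Import all_classical all_reals all_analysis.
From mathcomp Require Import complex.
Local Open Scope ring_scope.

Section Generic.
Import Order.TTheory GRing.Theory Num.Theory.
Import numFieldNormedType.Exports.
Local Open Scope classical_set_scope.
Local Open Scope ring_scope.

Variables (K : numFieldType) (V0 V1 : normedModType K).
Variables (i L : {linear V1 -> V0}).

Lemma normZpos (V : normedModType K) (t : K) (v : V) :
  0 < t -> `|t *: v| = t * `|v|.
Proof. by move=> t0; rewrite normrZ gtr0_norm. Qed.

Lemma a_to_b : weak_bounded i L -> cond_b i L.
Proof.
move=> wb fe f H1 [M HM].
have M0 : 0 <= M by apply: le_trans (HM 1 ltr01); exact: normr_ge0.
set B := M + `|f|.
have B0 : 0 <= B by rewrite addr_ge0.
have B1 : 0 < B + 1 by rewrite (lt_le_trans ltr01) // lerDr.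
apply/cvgr0Pnorm_le => e e0.
have e20 : 0 < e / 2 by rewrite divr_gt0 // ltr0n.
have [c [c0 Hc]] := wb (e / 2 / (B + 1)) (divr_gt0 e20 B1).
move/cvgr0Pnorm_le: H1 => /(_ (e / 2 / c) (divr_gt0 e20 c0)) H1'.
apply: filterS2 H1' (nbhs_right_gt 0) => eps Hn Hp.
rewrite normr_id -linearB.
rewrite normr_id -linearB in Hn.
apply: le_trans (Hc (fe eps - f)) _.
have y : `|fe eps - f| <= B + 1.
  apply: le_trans (ler_normB _ _) _.
  rewrite (le_trans _ (_ : B <= B + 1)) ?lerDl ?ler01 //.
  by rewrite lerD // HM.
rewrite [leRHS](splitr e); apply: lerD.
  apply: le_trans (ler_wpM2l (ltW c0) Hn) _.
  by rewrite mulrC divfK ?gt_eqF.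
apply: le_trans (ler_wpM2l (ltW (divr_gt0 e20 B1)) y) _.
by rewrite divfK ?gt_eqF.
Qed.

Lemma a_to_c : weak_bounded i L -> cond_c i L.
Proof.
move=> wb eta eta0.
have e20 : 0 < eta / 2 by rewrite divr_gt0 // ltr0n.
have [c [c0 Hc]] := wb (eta / 2) e20.
exists (eta / 2 / c); split; first by rewrite divr_gt0.
move=> δ δ0 δd f f1 fi.
apply: le_trans (Hc f) _.
rewrite [leRHS](splitr eta); apply: lerD.
  apply: le_trans (ler_wpM2l (ltW c0) (le_trans fi (ltW δd))) _.
  by rewrite mulrC divfK ?gt_eqF.
by apply: le_trans (ler_wpM2l (ltW e20) f1) _; rewrite mulr1.
Qed.

Lemma c_to_a : cond_c i L -> weak_bounded i L.
Proof.
move=> Hc eps e0.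
have [d [d0 Hd]] := Hc eps e0.
set δ := d / 2.
have δ0 : 0 < δ by rewrite divr_gt0 // ltr0n.
have δd : δ < d by rewrite /δ ltr_pdivrMr ?ltr0n // ltr_pMr // ltr1n.
exists (eps / δ); split; first by rewrite divr_gt0.
move=> f.
have [->|fn0] := eqVneq f 0.
  by rewrite !linear0 !normr0 !mulr0 addr0.
have nf : 0 < `|f| by rewrite normr_gt0.
case: (boolP (`|i f| <= δ * `|f|)) => hf.
- have nfi : 0 < `|f|^-1 by rewrite invr_gt0.
  have := Hd δ δ0 δd (`|f|^-1 *: f).
  rewrite !linearZ /= !normZpos // mulVf ?gt_eqF // lexx.
  rewrite ler_pdivrMl // ler_pdivrMl // => /(_ isT) h.
  have h' : `|L f| <= `|f| * eps by apply: h; rewrite mulrC.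
  apply: le_trans h' _.
  by rewrite mulrC lerDr mulr_ge0 // ltW // divr_gt0.
- have rl : δ * `|f| < `|i f|.
    rewrite real_ltNge ?hf // ger0_real //.
    by rewrite mulr_ge0 // ltW.
  have nif : 0 < `|i f| by apply: le_lt_trans rl; rewrite mulr_ge0 // ltW.
  have t0 : 0 < δ / `|i f| by rewrite divr_gt0.
  have := Hd δ δ0 δd ((δ / `|i f|) *: f).
  rewrite !linearZ /= !normZpos // mulrAC divfK ?gt_eqF // lexx.
  rewrite ler_pdivrMr // mul1r (ltW rl) => /(_ isT isT) h.
  apply: le_trans (_ : eps / δ * `|i f| <= _); last first.
    by rewrite lerDl mulr_ge0 // ltW.
  apply: le_trans (_ : (δ / `|i f|)^-1 * eps <= _).
    by rewrite ler_pdivlMl.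
  by rewrite invf_div mulrC mulrA mulrAC.
Qed.


Lemma b_to_c : cond_b i L -> cond_c i L.
Proof.
move=> Hb eta eta0.
apply: contrapT => nc.
have H : forall d : K, exists f : V1,
    0 < d -> [/\ `|f| <= 1, `|i f| <= d & ~ (`|L f| <= eta)].
  move=> d; case: (pselect (0 < d)) => d0; last by exists 0.
  apply: contrapT => nf; apply: nc; exists d; split => // δ δ0 δd f f1 fi.
  apply: contrapT => nL; apply: nf; exists f => _; split => //.
  exact: le_trans fi (ltW δd).
have [fe Hfe] := choice H.
have := Hb fe 0.
have -> : (fun eps => `|L (fe eps) - L 0|) = (fun eps => `|L (fe eps)|).
  by apply: funext => x; rewrite linear0 subr0.
move=> /(_ _ _) H2.
have H3 : (fun eps => `|L (fe eps)|) @ 0^'+ --> (0 : K).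
  apply: H2; last by exists 1 => eps e0; have [] := Hfe eps e0.
  apply/cvgr0Pnorm_le => e e0.
  apply: filterS2 (nbhs_right_le e0) (nbhs_right_gt 0) => x xe x0.
  rewrite normr_id; have [_ h _] := Hfe x x0.
  by rewrite linear0 subr0; exact: le_trans h xe.
move/cvgr0Pnorm_le: H3 => /(_ eta eta0) H4.
have [x [h1 h2]] := filter_ex (filterI H4 (nbhs_right_gt 0)).
have [_ _] := Hfe x h2; apply.
by rewrite normr_id in h1.
Qed.

Lemma tfae_generic : [<-> weak_bounded i L; cond_b i L; cond_c i L].
Proof.
tfae.
- exact: a_to_b.
- exact: b_to_c.
- exact: c_to_a.
Qed.

End Generic.

Theorem mainTheorem5 (R : realType) :
  weak_bounded_TFAE R /\ weak_bounded_TFAE R[i].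
Proof.
by split => V0 V1 i L _; exact: tfae_generic.
Qed.
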